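(* Let $G$ be a group (finite or infinite), let $F$ be a field of characteristic zero, and let $\mathfrak{S}$ be an $F$-subspace of $F[G]$. Then $\mathfrak{S}$ is a Schur module over $G$ if and only if $\mathfrak{S}$ is closed under the Hadamard product $\circ$ and for every $g\in G$ there exists $\alpha\in\mathfrak{S}$ with $g\in\operatorname{supp}(\alpha)$.
   Context: Elements of $F[G]$ are $\alpha=\sum_{g\in G}\alpha_g g$ with finitely many nonzero $\alpha_g\in F$; $\operatorname{supp}(\alpha)=\{g\in G\mid \alpha_g\neq 0\}$. The Hadamard product is $\alpha\circ\beta=\sum_g\alpha_g\beta_g g$. For finite $C\subseteq G$, $\overline{C}=\sum_{g\in C}g$. A partition $\mathcal{P}$ of $G$ has finite support if every block $C\in\mathcal{P}$ is finite. An $F$-subspace $\mathfrak{S}\subseteq F[G]$ is a Schur module if there is a partition $\mathcal{P}$ of $G$ of finite support such that $\mathfrak{S}=\operatorname{Span}_F\{\overline{C}\mid C\in\mathcal{P}\}$. *)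

(* Defs.v *)
From HB Require Import structures.
From mathcomp Require Import all_boot all_order all_algebra.
From mathcomp Require Import finmap.
Set Implicit Arguments. Unset Strict Implicit. Unset Printing Implicit Defensive.
Import Order.TTheory GRing.Theory.
Local Open Scope ring_scope.
Local Open Scope fset_scope.

(* Elements of the group algebra F[G] are represented as functions G -> F
   with finite support. *)
Definition fin_supp (G : choiceType) (F : fieldType) (a : G -> F) : Prop :=
  exists s : seq G, forall g, a g != 0 -> g \in s.

Definition supp (G : choiceType) (F : fieldType) (a : G -> F) : pred G :=
  fun g => a g != 0.

Definition hadamard (G : choiceType) (F : fieldType) (a b : G -> F) : G -> F :=
  fun g => a g * b g.

Definition is_subspace (G : choiceType) (F : fieldType) (S : (G -> F) -> Prop)
  : Prop :=
  [/\ forall a, S a -> fin_supp a,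
      S (fun _ => 0),
      (forall a b, S a -> S b -> S (fun g => (a g + b g)%R)) &
      (forall (c : F) a, S a -> S (fun g => c * a g))].

Definition bar (G : choiceType) (F : fieldType) (C : {fset G}) : G -> F :=
  fun g => (g \in C)%:R.

Definition fin_partition (G : choiceType) (P : {fset G} -> Prop) : Prop :=
  (forall C, P C -> C != fset0) /\
  (forall g, exists C, [/\ P C, g \in C & forall C', P C' -> g \in C' -> C' = C]).

Definition span_bars (G : choiceType) (F : fieldType) (P : {fset G} -> Prop)
  (a : G -> F) : Prop :=
  exists l : seq (F * {fset G}),
    (forall p, p \in l -> P p.2) /\
    (forall g, a g = \sum_(p <- l) p.1 * @bar G F p.2 g).

Definition schur_module (G : choiceType) (F : fieldType) (S : (G -> F) -> Prop)
  : Prop :=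
  exists P : {fset G} -> Prop,
    fin_partition P /\ (forall a, S a <-> span_bars P a).

(* Main.v *)
Require Import Defs.
From HB Require Import structures.
From mathcomp Require Import all_boot all_order all_algebra.
From mathcomp Require Import finmap.
From mathcomp Require Import ring.
From Stdlib Require Import Classical FunctionalExtensionality.
Set Implicit Arguments. Unset Strict Implicit. Unset Printing Implicit Defensive.
Import GRing.Theory.
Local Open Scope ring_scope.

Lemma sub_ext (G : choiceType) (F : fieldType) (S : (G -> F) -> Prop) a b :
  S a -> (forall g, a g = b g) -> S b.
Proof.
move=> Sa e; have -> : b = a by apply: functional_extensionality => g; rewrite e.
done.
Qed.

Definition mult (G : choiceType) (F : fieldType) (S : (G -> F) -> Prop) (f : G -> F) :=
  forall b, S b -> S (fun h => f h * b h).

Lemma mult_prod (G : choiceType) (F : fieldType) (S : (G -> F) -> Prop)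
  (HS : is_subspace S) (T : Type) (r : seq T) (P : pred T) (Fi : T -> G -> F) :
  (forall i, mult S (Fi i)) -> mult S (fun h => \prod_(i <- r | P i) Fi i h).
Proof.
case: HS => _ S0 Sadd Sscal Hi.
elim: r => [|x r IH] b Sb.
  eapply sub_ext; [exact Sb|] => g /=; by rewrite big_nil mul1r.
case Px: (P x).
  eapply sub_ext; [exact: (Hi x _ (IH b Sb))|] => g /=.
  by rewrite big_cons Px mulrA.
by eapply sub_ext; [exact: (IH b Sb)|] => g /=; rewrite big_cons Px.
Qed.

Definition ind (G : choiceType) (F : fieldType) (b : G -> F) (c : F) : G -> F :=
  fun h => if b h == c then 1 else 0.

Lemma ind_in (G : choiceType) (F : fieldType) (S : (G -> F) -> Prop)
  (HS : is_subspace S) (Hh : forall a b, S a -> S b -> S (hadamard a b)) b c :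
  S b -> c != 0 -> S (ind b c).
Proof.
move=> Sb c0; have HS' := HS; case: HS' => Hfin S0 Sadd Sscal.
case: (Hfin b Sb) => s Hs.
pose r := map b s.
have M : mult S (fun h => \prod_(v <- r | v != c) ((b h - v) / (c - v))).
  apply: mult_prod => // v b' Sb'.
  have S1 : S (fun h => (c - v)^-1 * hadamard b b' h) by apply: Sscal; apply: Hh.
  have S2 : S (fun h => (- v / (c - v)) * b' h) by apply: Sscal.
  eapply sub_ext; [exact: (Sadd _ _ S1 S2)|] => h /=; rewrite /hadamard.
  ring.
eapply sub_ext; [exact: (M _ (Sscal c^-1 _ Sb))|] => h /=.
rewrite /ind; case: eqP => [->|bh].
  rewrite big1_seq; first by rewrite mul1r mulVf.
  move=> v /andP [vc _]; apply: mulfV; by rewrite subr_eq0 eq_sym.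
case: (eqVneq (b h) 0) => [->|bh0]; first by rewrite !mulr0.
apply/eqP; rewrite mulf_eq0; apply/orP; left.
rewrite prodf_seq_eq0; apply/hasP; exists (b h).
  by rewrite /r; apply: map_f; apply: Hs.
by rewrite subrr mul0r eqxx andbT; apply/eqP.
Qed.

Definition Rel (G : choiceType) (F : fieldType) (S : (G -> F) -> Prop) (g h : G) :=
  forall b, S b -> b h = b g.

Lemma block_ex (G : choiceType) (F : fieldType) (S : (G -> F) -> Prop)
  (HS : is_subspace S) (Hh : forall a b, S a -> S b -> S (hadamard a b)) g a0 :
  S a0 -> a0 g != 0 -> forall t : seq G, exists e,
  [/\ S e, e g = 1, (forall h, e h = 0 \/ e h = 1), (forall h, e h = 1 -> a0 h = a0 g)
    & (forall h, h \in t -> ~ Rel S g h -> e h = 0)].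
Proof.
move=> Sa0 ag0; have HS' := HS; case: HS' => Hfin S0 Sadd Sscal.
elim=> [|x t IH]; last case: IH => e [Se eg e01 e1 et].
  exists (ind a0 (a0 g)); split => //.
  - exact: ind_in.
  - by rewrite /ind eqxx.
  - by move=> h; rewrite /ind; case: eqP; [right|left].
  - by move=> h; rewrite /ind; case: eqP => // _ /eqP; rewrite eq_sym oner_eq0.
case: (classic (Rel S g x)) => Rx.
  exists e; split => // h; rewrite inE => /orP [/eqP -> //|]; exact: et.
have [b nb] := not_all_ex_not _ _ Rx.
have [Sb bx] := imply_to_and _ _ nb.
have bx' : b x != b g by apply/eqP.
case: (eqVneq (b g) 0) => bg0.
  have bx0 : b x != 0 by rewrite -bg0.
  have Sf := ind_in HS Hh Sb bx0.
  have Sp : S (fun h => e h + (-1) * hadamard e (ind b (b x)) h).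
    by apply: Sadd => //; apply: Sscal; apply: Hh.
  eexists; split; first exact: Sp.
  - by rewrite /hadamard /ind eg bg0 eq_sym (negbTE bx0); ring.
  - move=> h; rewrite /hadamard /ind; case: (e01 h) => ->; case: eqP => _;
    by [left; ring | right; ring].
  - move=> h; rewrite /hadamard /ind; case: (e01 h) => E; last by move=> _; exact: e1.
    rewrite E; case: eqP => _; rewrite !mul0r !mulr0 add0r => /eqP;
      by rewrite eq_sym oner_eq0.
  - move=> h; rewrite inE /hadamard /ind => /orP [/eqP ->|ht] Rh.
      by rewrite eqxx; ring.
    by rewrite (et h ht Rh); ring.
have Sf := ind_in HS Hh Sb bg0.
eexists; split; first exact: (Hh _ _ Se Sf).
- by rewrite /hadamard /ind eg eqxx mulr1.
- by move=> h; rewrite /hadamard /ind; case: (e01 h) => ->; case: eqP => _;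
    by [left; ring | right; ring].
- move=> h; rewrite /hadamard /ind; case: (e01 h) => E; last by move=> _; exact: e1.
  by rewrite E mul0r => /eqP; rewrite eq_sym oner_eq0.
- move=> h; rewrite inE /hadamard /ind => /orP [/eqP ->|ht] Rh.
    by rewrite (negbTE bx') mulr0.
  by rewrite (et h ht Rh) mul0r.
Qed.

Lemma fset_filter_ex (G : choiceType) (Q : G -> Prop) (s : seq G) :
  exists C : {fset G}, forall h, h \in C <-> (h \in s /\ Q h).
Proof.
elim: s => [|x s [C HC]].
  by exists fset0 => h; rewrite in_fset0; split => // [[]].
case: (classic (Q x)) => Qx.
  exists (x |` C)%fset => h; rewrite !inE; split.
    case/orP => [/eqP -> | /HC [hs Qh]]; first by rewrite eqxx.
    by rewrite hs orbT.
  case=> /orP [/eqP -> | hs] Qh; first by rewrite eqxx.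
  by apply/orP; right; apply/HC.
exists C => h; rewrite HC inE; split; first by case=> -> Qh; rewrite orbT.
case=> /orP [/eqP -> | -> Qh] //.
Qed.

Lemma bar_1 (G : choiceType) {F : fieldType} (C : {fset G}) h :
  h \in C -> @bar G F C h = 1.
Proof. by rewrite /bar => ->. Qed.

Lemma bar_0 (G : choiceType) {F : fieldType} (C : {fset G}) h :
  h \notin C -> @bar G F C h = 0.
Proof. by rewrite /bar => /negbTE ->. Qed.

Lemma forward (G : choiceType) (F : fieldType) (S : (G -> F) -> Prop) :
  schur_module S ->
  ((forall a b, S a -> S b -> S (hadamard a b)) /\
   (forall g : G, exists a, S a /\ g \in supp a)).
Proof.
case=> P [[Pne Pex] HSP]; split.
  move=> a b /HSP [la [Pla Ha]] /HSP [lb [Plb Hb]]; apply/HSP.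
  exists [seq (p.1 * q.1 * (p.2 == q.2)%:R, p.2) | p <- la, q <- lb]; split.
    by move=> r /allpairsP [[p q] [pl ql ->]] /=; apply: Pla.
  move=> g; rewrite big_allpairs_dep /hadamard Ha Hb mulr_suml.
  apply: eq_big_seq => p pl; rewrite mulr_sumr; apply: eq_big_seq => q ql /=.
  case: (Pex g) => C [PC gC UC].
  case: (boolP (g \in p.2)) => gp; last by rewrite (bar_0 gp); ring.
  case: (boolP (g \in q.2)) => gq; last first.
    case: eqP => [e|_]; first by move: gp; rewrite e (negbTE gq).
    by rewrite (bar_0 gq) mulr0n; ring.
  have -> : p.2 = q.2 by rewrite (UC _ (Pla _ pl) gp) (UC _ (Plb _ ql) gq).
  by rewrite eqxx (bar_1 gq) mulr1n; ring.
move=> g; case: (Pex g) => C [PC gC _]; exists (bar F C); split.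
  apply/HSP; exists [:: (1, C)]; split; first by move=> p; rewrite inE => /eqP ->.
  by move=> h; rewrite big_cons big_nil /= mul1r addr0.
by rewrite unfold_in /supp /= (bar_1 gC) oner_neq0.
Qed.

Lemma backward (G : choiceType) (F : fieldType) (S : (G -> F) -> Prop)
  (HS : is_subspace S) :
  ((forall a b, S a -> S b -> S (hadamard a b)) /\
   (forall g : G, exists a, S a /\ g \in supp a)) -> schur_module S.
Proof.
case=> Hh Hsupp; have HS' := HS; case: HS' => Hfin S0 Sadd Sscal.
have Rrefl : forall g, Rel S g g by [].
have Cex : forall g, exists C : {fset G}, forall h, h \in C <-> Rel S g h.
  move=> g; case: (Hsupp g) => a [Sa]; rewrite unfold_in /supp /= => ag.
  case: (Hfin a Sa) => s Hs.
  case: (fset_filter_ex (Rel S g) s) => C HC; exists C => h; rewrite HC.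
  split; first by case.
  move=> R; split => //; apply: Hs; by rewrite (R a Sa).
have Sbar : forall g (C : {fset G}), (forall h, h \in C <-> Rel S g h) -> S (bar F C).
  move=> g C hC; case: (Hsupp g) => a [Sa]; rewrite unfold_in /supp /= => ag.
  case: (Hfin a Sa) => s Hs.
  case: (block_ex HS Hh Sa ag s) => e [Se eg e01 e1 et].
  eapply sub_ext; [exact: Se|] => h.
  case: (classic (Rel S g h)) => R.
    by rewrite bar_1; [rewrite (R e Se) | apply/hC].
  rewrite bar_0; last by apply/negP => /hC.
  case: (boolP (h \in s)) => hs; first exact: et.
  case: (e01 h) => // E; have := e1 h E => ahg.
  by move: hs; rewrite Hs // ahg.
pose P := fun C : {fset G} => exists g, forall h, h \in C <-> Rel S g h.
exists P; split.
  split.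
    move=> C [g hC]; apply/eqP => C0.
    by have := proj2 (hC g) (Rrefl g); rewrite C0 in_fset0.
  move=> g; case: (Cex g) => C hC; exists C; split.
  - by exists g.
  - exact/hC.
  - move=> C' [g' hC'] gC'; have Rg := proj1 (hC' g) gC'.
    apply/fsetP => h; apply/idP/idP.
      move/hC' => R; apply/hC => b Sb; by rewrite (R b Sb) (Rg b Sb).
    move/hC => R; apply/hC' => b Sb; by rewrite (R b Sb) (Rg b Sb).
have SP : forall C, P C -> S (bar F C) by move=> C [g hC]; exact: Sbar hC.
move=> a; split.
  move=> Sa; case: (Hfin a Sa) => s; elim: s a Sa => [|x s IH] a Sa Hs.
    exists [::]; split => // g; rewrite big_nil.
    by apply/eqP; apply/negPn/negP => /Hs.
  case: (eqVneq (a x) 0) => ax.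
    apply: IH => // h ah; have := Hs h ah; rewrite inE => /orP [/eqP E|//].
    by move: ah; rewrite E ax eqxx.
  case: (Cex x) => C hC.
  have Sa' : S (fun g => a g + (- a x) * bar F C g).
    by apply: Sadd => //; apply: Sscal; exact: Sbar hC.
  have [l' [Pl' Hl']] : span_bars P (fun g => a g + (- a x) * bar F C g).
    apply: IH => // h; case: (classic (Rel S x h)) => R.
      by rewrite bar_1; [rewrite (R a Sa) mulr1 subrr eqxx | apply/hC].
    rewrite bar_0; last by apply/negP => /hC.
    rewrite mulr0 addr0 => ah; have := Hs h ah; rewrite inE => /orP [/eqP E|//].
    by case: R; rewrite E.
  exists ((a x, C) :: l'); split.
    move=> p; rewrite inE => /orP [/eqP -> | /Pl' //]; by exists x.
  move=> g; rewrite big_cons -Hl' /=; ring.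
have Sl : forall l : seq (F * {fset G}), (forall p, p \in l -> P p.2) ->
    S (fun g => \sum_(p <- l) p.1 * bar F p.2 g).
  elim=> [|p l IH] Pl.
    by eapply sub_ext; [exact: S0|] => g; rewrite big_nil.
  have Sp : S (fun g => p.1 * bar F p.2 g).
    by apply: Sscal; apply: SP; apply: Pl; rewrite inE eqxx.
  have Sl := IH (fun q ql => Pl q (@mem_behead _ (p :: l) q ql)).
  by eapply sub_ext; [exact: (Sadd _ _ Sp Sl)|] => g; rewrite big_cons.
case=> l [Pl Hl]; eapply sub_ext; [exact: (Sl l Pl)|] => g; by rewrite Hl.
Qed.

Unset Implicit Arguments.

Theorem theorem2p7 (G : groupType) (F : fieldType)
  (charF0 : [pchar F] =i pred0)
  (S : (G -> F) -> Prop) (HS : is_subspace S) :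
  schur_module S <->
  ((forall a b, S a -> S b -> S (hadamard a b)) /\
   (forall g : G, exists a, S a /\ g \in supp a)).
Proof.
split; [exact: forward | exact: backward].
Qed.
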